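(* Let $\mathbf{v}_1,\ldots,\mathbf{v}_k$ be orthogonal unit vectors in $\mathbb{R}^k$, let $F:\mathbb{R}^{kn}\to\mathbb{R}$ be \[ F(\mathbf{w}_1,\ldots,\mathbf{w}_n)=\mathbb{E}_{\mathbf{x}\sim\mathcal{N}(\mathbf{0},I_k)}\left[\frac{1}{2}\left(\sum_{i=1}^{n}[\mathbf{w}_i^\top\mathbf{x}]_+-\sum_{i=1}^{k}[\mathbf{v}_i^\top\mathbf{x}]_+\right)^2\right], \] and let $\mathbf{w}=(\mathbf{w}_1,\ldots,\mathbf{w}_n)\in\mathbb{R}^{kn}$ and $\alpha>0$ be such that $F$ is thrice differentiable on an open set containing the closed ball of radius $\alpha$ centered at $\mathbf{w}$. For a unit vector $\mathbf{u}\in\mathbb{R}^{kn}$ and $t\in(0,\alpha]$ let $R_{\mathbf{w},\mathbf{u},t}$ be the number with $F(\mathbf{w}+t\mathbf{u})=F(\mathbf{w})+t\nabla F(\mathbf{w})^\top\mathbf{u}+\tfrac{1}{2}t^2\mathbf{u}^\top\nabla^2F(\mathbf{w})\mathbf{u}+\tfrac{1}{6}t^3R_{\mathbf{w},\mathbf{u},t}$. Assume that for some $\epsilon,B>0$, $\|\nabla F(\mathbf{w})\|\le\epsilon$ and $\sup_{t\in(0,\alpha],\|\mathbf{u}\|=1}|R_{\mathbf{w},\mathbf{u},t}|\le B$; that the smallest eigenvalue $\lambda_{\min}$ of $\nabla^2F(\mathbf{w})$ is positive; that $9\lambda_{\min}^2-25B\epsilon\ge0$; and that $r:=\frac{3\lambda_{\min}-\sqrt{9\lambda_{\min}^2-25B\epsilon}}{2B}$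 satisfies $r<\alpha$ and $r<\min_i\|\mathbf{w}_i\|$. If moreover \[ F(\mathbf{w})>r^2\left(\frac{1}{2}+n(n-1)\left(\frac{\max_i\|\mathbf{w}_i\|+r}{2\pi(\min_i\|\mathbf{w}_i\|-r)}+\frac{1}{2}\right)+\frac{nk\max_i\|\mathbf{v}_i\|}{2\pi(\min_i\|\mathbf{w}_i\|-r)}\right)+r\epsilon, \] then $F$ has a local minimum $\mathbf{w}^*$ with $\|\mathbf{w}^*-\mathbf{w}\|\le r$ which is not a global minimum (i.e. $F(\mathbf{w}^* )>\inf F=0$).
   Context: $[z]_+=\max\{0,z\}$. A local minimum of $F$ is a point $\mathbf{w}^*$ with $F(\mathbf{w}^* )\le F(\mathbf{w}')$ for all $\mathbf{w}'$ in some open neighborhood of $\mathbf{w}^*$. Norms are Euclidean. *)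

(* Defs.v *)
From HB Require Import structures.
From mathcomp Require Import all_boot all_order all_algebra.
From mathcomp Require Import all_classical all_reals all_analysis.
Set Implicit Arguments. Unset Strict Implicit. Unset Printing Implicit Defensive.
Import Order.TTheory GRing.Theory Num.Theory.
Import numFieldNormedType.Exports.
Local Open Scope ring_scope.
Local Open Scope classical_set_scope.

Section Defs.
Variable R : realType.

Definition relu (z : R) : R := Num.max 0 z.

Definition dotv m (u x : 'rV[R]_m) : R := \sum_(a < m) u 0 a * x 0 a.
Definition enorm m (u : 'rV[R]_m) : R := Num.sqrt (\sum_(a < m) u 0 a ^+ 2).

(* E_{x ~ N(0, I_m)} [g x], as the iterated integral against the standard
   one-dimensional Gaussian density in each coordinate (Lebesgue integral). *)
Fixpoint gauss_exp (m : nat) : ('rV[R]_m -> R) -> R :=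
  match m return ('rV[R]_m -> R) -> R with
  | 0 => fun g => g 0
  | m'.+1 => fun g =>
      (\int[lebesgue_measure]_(x in setT)
         (normal_pdf 0 1 x * gauss_exp (fun y : 'rV[R]_m' => g (row_mx (const_mx x : 'rV[R]_1) y))))%R
  end.

(* w in R^{kn} is a row vector of length n*k; w_i is the i-th block *)
Definition wblock n k (W : 'rV[R]_(n * k)) (i : 'I_n) : 'rV[R]_k :=
  row i (vec_mx W).

Definition Floss k n (v : 'I_k -> 'rV[R]_k) (W : 'rV[R]_(n * k)) : R :=
  gauss_exp (fun x : 'rV[R]_k =>
    2^-1 * (\sum_(i < n) relu (dotv (wblock W i) x)
            - \sum_(i < k) relu (dotv (v i) x)) ^+ 2).

Definition ebasis N (a : 'I_N) : 'rV[R]_N := delta_mx 0 a.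

Definition pderiv N (a : 'I_N) (f : 'rV[R]_N -> R) : 'rV[R]_N -> R :=
  fun y => derive f y (ebasis a).

Definition thrice_diff_at N (f : 'rV[R]_N -> R) (y : 'rV[R]_N) : Prop :=
  [/\ differentiable f y,
      (forall a, differentiable (pderiv a f) y) &
      (forall a b, differentiable (pderiv a (pderiv b f)) y)].

Definition gradient N (f : 'rV[R]_N -> R) (y : 'rV[R]_N) : 'rV[R]_N :=
  \row_a pderiv a f y.

Definition hessian N (f : 'rV[R]_N -> R) (y : 'rV[R]_N) : 'M[R]_N :=
  \matrix_(a, b) pderiv a (pderiv b f) y.

Definition min_eigenvalue N (A : 'M[R]_N) (lam : R) : Prop :=
  eigenvalue A lam /\ forall mu, eigenvalue A mu -> lam <= mu.

Definition remainder N (f : 'rV[R]_N -> R) (w u : 'rV[R]_N) (t : R) : R :=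
  6 / t ^+ 3 * (f (w + t *: u) - f w - t * dotv (gradient f w) u
                - 2^-1 * t ^+ 2 * (u *m hessian f w *m u^T) 0 0).

End Defs.

(* Main.v *)
Require Import Defs.
From HB Require Import structures.
From mathcomp Require Import all_boot all_order all_algebra.
From mathcomp Require Import all_classical all_reals all_analysis.
From mathcomp Require Import ring lra.
Import Order.TTheory GRing.Theory Num.Theory.
Import numFieldNormedType.Exports.
Local Open Scope ring_scope.
Local Open Scope classical_set_scope.

Set Implicit Arguments. Unset Strict Implicit.

Section Enorm.
Variable R : realType.
Variable N : nat.
Implicit Types u v w : 'rV[R]_N.

Lemma mul_self_ge0 (x : R) : 0 <= x * x.
Proof. by rewrite -expr2 sqr_ge0. Qed.

Lemma dotvC u v : dotv u v = dotv v u.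
Proof. by apply: eq_bigr => a _; rewrite mulrC. Qed.

Lemma dotvDl u v w : dotv (u + v) w = dotv u w + dotv v w.
Proof. by rewrite /dotv -big_split; apply: eq_bigr => a _; rewrite mxE mulrDl. Qed.

Lemma dotvZl (c : R) u w : dotv (c *: u) w = c * dotv u w.
Proof. by rewrite /dotv mulr_sumr; apply: eq_bigr => a _; rewrite mxE mulrA. Qed.

Lemma dotvDr u v w : dotv w (u + v) = dotv w u + dotv w v.
Proof. by rewrite dotvC dotvDl !(dotvC w). Qed.

Lemma dotvZr (c : R) u w : dotv w (c *: u) = c * dotv w u.
Proof. by rewrite dotvC dotvZl dotvC. Qed.

Lemma dotvNl u w : dotv (- u) w = - dotv u w.
Proof. by rewrite -scaleN1r dotvZl mulN1r. Qed.

Lemma dotvNr u w : dotv w (- u) = - dotv w u.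
Proof. by rewrite dotvC dotvNl dotvC. Qed.

Lemma dotvv_ge0 u : 0 <= dotv u u.
Proof. by apply: sumr_ge0 => a _; rewrite mul_self_ge0. Qed.

Lemma enorm_ge0 u : 0 <= enorm u.
Proof. exact: sqrtr_ge0. Qed.

Lemma enorm_sq u : enorm u ^+ 2 = dotv u u.
Proof.
rewrite /enorm sqr_sqrtr; last by apply: sumr_ge0 => a _; rewrite sqr_ge0.
by apply: eq_bigr => a _; rewrite expr2.
Qed.

Lemma enormE u : enorm u = Num.sqrt (dotv u u).
Proof. by rewrite -enorm_sq sqrtr_sqr ger0_norm ?enorm_ge0. Qed.

Lemma dotvv_eq0 u : dotv u u = 0 -> u = 0.
Proof.
move=> h; apply/rowP => a; rewrite mxE.
have: u 0 a * u 0 a = 0.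
  apply/eqP; move/eqP: h; rewrite /dotv psumr_eq0 => [/allP H|b _]; last by rewrite mul_self_ge0.
  by apply: H; rewrite mem_index_enum.
by move/eqP; rewrite mulf_eq0 orbb => /eqP.
Qed.

Lemma enorm_eq0 u : enorm u = 0 -> u = 0.
Proof. by move=> h; apply: dotvv_eq0; rewrite -enorm_sq h expr0n. Qed.

Lemma enorm0 : enorm (0 : 'rV[R]_N) = 0.
Proof. by rewrite enormE /dotv big1 ?sqrtr0 // => a _; rewrite mxE mul0r. Qed.

Lemma enormZ (c : R) u : enorm (c *: u) = `|c| * enorm u.
Proof.
by rewrite !enormE dotvZl dotvZr mulrA -expr2 sqrtrM ?sqr_ge0 // sqrtr_sqr.
Qed.

Lemma enormN u : enorm (- u) = enorm u.
Proof. by rewrite -scaleN1r enormZ normrN normr1 mul1r. Qed.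

Lemma dotv_expand (x y : R) u v :
  dotv (x *: u + y *: v) (x *: u + y *: v) =
  x ^+ 2 * dotv u u + 2 * x * y * dotv u v + y ^+ 2 * dotv v v.
Proof.
rewrite !(dotvDl, dotvDr, dotvZl, dotvZr) (dotvC v u); ring.
Qed.

Lemma CS u v : `|dotv u v| <= enorm u * enorm v.
Proof.
set a := enorm u; set b := enorm v.
have a0 : 0 <= a by apply: enorm_ge0.
have b0 : 0 <= b by apply: enorm_ge0.
have [ua|a0'] := eqVneq a 0.
  by rewrite (enorm_eq0 ua) /dotv big1 ?normr0 ?mulr_ge0 // => i _; rewrite mxE mul0r.
have [vb|b0'] := eqVneq b 0.
  by rewrite (enorm_eq0 vb) /dotv big1 ?normr0 ?mulr_ge0 // => i _; rewrite mxE mulr0.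
have ab : 0 < a * b by rewrite mulr_gt0 // lt0r ?a0' ?b0'.
have h1 := dotvv_ge0 (b *: u + (- a) *: v).
have h2 := dotvv_ge0 (b *: u + a *: v).
rewrite dotv_expand -!enorm_sq -/a -/b in h1.
rewrite dotv_expand -!enorm_sq -/a -/b in h2.
rewrite ler_norml; apply/andP; split; nra.
Qed.

Lemma enormD u v : enorm (u + v) <= enorm u + enorm v.
Proof.
rewrite -(ler_pXn2r (_ : (0 < 2)%N)) ?nnegrE ?addr_ge0 ?enorm_ge0 //.
rewrite enorm_sq !(dotvDl, dotvDr) -!enorm_sq (dotvC v u).
have h := CS u v.
have h2 : dotv u v <= enorm u * enorm v by apply: le_trans (ler_norm _) h.
nra.
Qed.

Lemma coord_le_enorm u a : `|u 0 a| <= enorm u.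
Proof.
rewrite -(ler_pXn2r (_ : (0 < 2)%N)) ?nnegrE ?enorm_ge0 // enorm_sq real_normK ?num_real //.
rewrite /dotv (bigD1 a) //= expr2 lerDl; apply: sumr_ge0 => i _; exact: mul_self_ge0.
Qed.

End Enorm.

Section Cont.
Variable R : realType.

Lemma cont_sum (T : topologicalType) (I : Type) (s : seq I) (F : I -> T -> R) :
  (forall i, continuous (F i)) -> continuous (fun x => \sum_(i <- s) F i x).
Proof.
move=> Fc; elim: s => [|i s IH].
  by under eq_fun do rewrite big_nil; exact: cst_continuous.
under eq_fun do rewrite big_cons.
by move=> x; apply: continuousD; [exact: Fc | exact: IH].
Qed.

Variable N : nat.

Lemma mxnorm_le_enorm (u : 'rV[R]_N) : `|u| <= enorm u.
Proof.
rewrite [leLHS]/Num.norm /= mx_normrE; apply: bigmax_le; first exact: enorm_ge0.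
by move=> [i j] _ /=; rewrite (ord1 i); exact: coord_le_enorm.
Qed.

Lemma enorm_continuous : continuous (@enorm R N).
Proof.
move=> x; apply: continuous_comp; last exact: sqrt_continuous.
have -> : (fun u : 'rV[R]_N => \sum_(a < N) u 0 a ^+ 2) =
   (fun u => \sum_(a < N) u 0 a * u 0 a) by apply: funext => u; apply: eq_bigr => a _; rewrite expr2.
apply: (@cont_sum _ _ _ (fun a (u : 'rV[R]_N) => u 0 a * u 0 a)) => a y.
by apply: continuousM; exact: coord_continuous.
Qed.

Lemma qform_continuous (H : 'M[R]_N) :
  continuous (fun u : 'rV[R]_N => (u *m H *m u^T) 0 0).
Proof.
have -> : (fun u : 'rV[R]_N => (u *m H *m u^T) 0 0) =
   (fun u => \sum_(b < N) (\sum_(a < N) u 0 a * H a b) * u 0 b).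
  apply: funext => u; rewrite mxE; apply: eq_bigr => b _; rewrite !mxE; congr (_ * _).
apply: (@cont_sum _ _ _ (fun b (u : 'rV[R]_N) => (\sum_(a < N) u 0 a * H a b) * u 0 b)) => b y.
apply: continuousM; last exact: coord_continuous.
apply: (@cont_sum _ _ _ (fun a (u : 'rV[R]_N) => u 0 a * H a b)) => a z.
by apply: continuousM; [exact: coord_continuous | exact: cst_continuous].
Qed.

Lemma enorm_ball_compact (W : 'rV[R]_N) (r : R) (P : R -> Prop) :
  (forall x, P x -> x <= r) ->
  closed [set y | P (enorm (y - W))] ->
  compact [set y | P (enorm (y - W))].
Proof.
move=> Pr cl; apply: bounded_closed_compact; last exact: cl.
rewrite /= /bounded_near.
apply: filterS (nbhs_pinfty_gt (num_real (r + enorm W))) => M hM y /= Py.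
apply: le_trans (mxnorm_le_enorm _) _.
have := enormD (y - W) W; rewrite subrK => h.
apply: (le_trans h); apply: ltW; apply: le_lt_trans hM.
by rewrite lerD2r; exact: Pr.
Qed.

End Cont.

Section Ray.
Variable R : realType.
Variable N : nat.
Variable H : 'M[R]_N.

Definition Bf (u v : 'rV[R]_N) := (u *m H *m v^T) 0 0.

Lemma BfE u v : Bf u v = dotv (u *m H) v.
Proof. by rewrite /Bf /dotv [LHS]mxE; apply: eq_bigr => b _; rewrite [v^T _ _]mxE. Qed.

Lemma dotv_e (u : 'rV[R]_N) (j : 'I_N) : dotv u (@ebasis R N j) = u 0 j.
Proof.
rewrite /dotv (bigD1 j) //= big1 ?addr0; first by rewrite /ebasis mxE !eqxx mulr1.
by move=> i /negbTE ij; rewrite /ebasis mxE ij andbF mulr0.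
Qed.

Lemma closed_sphere (W : 'rV[R]_N) (c : R) :
  closed [set y | enorm (y - W) = c].
Proof.
have fc : continuous (fun y : 'rV[R]_N => enorm (y - W)).
  move=> y; apply: continuous_comp; last exact: enorm_continuous.
  by apply: continuousB; [exact: cvg_id | exact: cst_continuous].
exact: (proj1 (continuous_closedP _) fc [set x | x = c] (@closed_eq R c)).
Qed.

Hypothesis Hsym : H^T = H.

Lemma Bsym u v : Bf u v = Bf v u.
Proof.
rewrite /Bf; have -> : (u *m H *m v^T) 0 0 = ((u *m H *m v^T)^T) 0 0 by rewrite [RHS]mxE.
by rewrite !trmx_mul trmxK Hsym mulmxA.
Qed.

Lemma rayleigh lam : min_eigenvalue H lam ->
  forall u : 'rV[R]_N, enorm u = 1 -> lam <= Bf u u.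
Proof.
move=> [_ lmin] u u1.
pose S := [set y : 'rV[R]_N | enorm (y - 0) = 1].
have S0 : S !=set0 by exists u; rewrite /S /= subr0.
have cS : compact S.
  apply: (@enorm_ball_compact _ _ 0 1 (fun x => x = 1)) => [x -> //|].
  exact: closed_sphere.
have qc : {within S, continuous (fun y => Bf y y)}.
  by apply: continuous_subspaceT; exact: qform_continuous.
have [u0 u0S u0min] := EVT_min_rV S0 cS qc.
move: u0S; rewrite inE /S /= subr0 => u01.
set m := Bf u0 u0.
have claim1 : forall v, m * dotv v v <= Bf v v.
  move=> v; have [->|v0] := eqVneq v 0.
    by rewrite /Bf !mul0mx mxE -enorm_sq enorm0 expr0n /= mulr0.
  have c0 : 0 < enorm v.
    by rewrite lt0r enorm_ge0 andbT; apply/eqP => /enorm_eq0 /eqP; rewrite (negbTE v0).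
  set c := enorm v in c0.
  have h := u0min (c^-1 *: v).
  have : c^-1 *: v \in S.
    by rewrite inE /S /= subr0 enormZ ger0_norm ?invr_ge0 ?ltW // mulVf // gt_eqF.
  move/h; rewrite [X in _ <= X]BfE -scalemxAl dotvZl dotvZr -BfE -/m => hm.
  rewrite -enorm_sq -/c.
  have : m * c ^+ 2 <= c ^+ 2 * (c^-1 * (c^-1 * Bf v v)).
    by rewrite mulrC ler_pM2l // exprn_gt0.
  have -> : c ^+ 2 * (c^-1 * (c^-1 * Bf v v)) = Bf v v by field; rewrite gt_eqF.
  by [].
have claim2 : forall d, Bf u0 d = m * dotv u0 d.
  move=> d; set L := Bf u0 d - m * dotv u0 d; set K := Bf d d - m * dotv d d.
  have hs : forall s, 0 <= 2 * s * L + s ^+ 2 * K.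
    move=> s; have := claim1 (u0 + s *: d).
    rewrite !BfE !(mulmxDl, dotvDl, dotvDr, dotvZl, dotvZr) -scalemxAl dotvZl.
    rewrite -!BfE -/m (Bsym d u0) -enorm_sq u01 expr1n => hh.
    rewrite !dotvZl (dotvC d u0) -!BfE -/m in hh.
    rewrite -subr_ge0 in hh; apply: (le_trans hh); rewrite /L /K.
    by rewrite le_eqVlt; apply/orP; left; apply/eqP; ring.
  set M := `|K| + 1.
  have M0 : 0 < M by rewrite /M ltr_pwDr // normr_ge0.
  have := hs (- L / M).
  have KM : K - 2 * M < 0 by rewrite /M; have := ler_norm K; have := normr_ge0 K; lra.
  have -> : 2 * (- L / M) * L + (- L / M) ^+ 2 * K = L ^+ 2 * (K - 2 * M) / M ^+ 2.
    by field; rewrite gt_eqF.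
  rewrite pmulr_lge0 ?invr_gt0 ?exprn_gt0 // => hL.
  have : L ^+ 2 <= 0.
    by rewrite -(@ler_nM2r _ (K - 2 * M)) // mul0r.
  rewrite real_exprn_even_le0 ?num_real // => /eqP L0.
  by apply/eqP; rewrite -subr_eq0 -/L L0.
have eig : eigenvalue H m.
  apply/eigenvalueP; exists u0.
    apply/rowP => j; have := claim2 (@ebasis R N j).
    by rewrite BfE !dotv_e => ->; rewrite [RHS]mxE.
  by apply/eqP => u00; move: u01; rewrite u00 enorm0 => /eqP; rewrite eq_sym oner_eq0.
apply: le_trans (lmin _ eig) _.
have := claim1 u; rewrite -enorm_sq u1 expr1n mulr1 //.
Qed.

End Ray.

Section Schwarz.
Variable R : realType.
Variable N : nat.

Lemma line_is_derive (f : 'rV[R]_N -> R) (P e : 'rV[R]_N) (x0 : R) :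
  derivable f (x0 *: e + P) e ->
  is_derive x0 1 (fun x : R => f (x *: e + P)) (derive f (x0 *: e + P) e).
Proof.
move=> df.
have E : (fun h : R => h^-1 *: (((fun x : R => f (x *: e + P)) \o shift x0) (h *: 1) - f (x0 *: e + P)))
   = (fun h : R => h^-1 *: ((f \o shift (x0 *: e + P)) (h *: e) - f (x0 *: e + P))).
  apply: funext => h /=; congr (_ *: (f _ - _)).
  by rewrite [h *: 1]mulr1 scalerDl addrA.
apply: DeriveDef; first by rewrite /derivable E.
by rewrite /derive E.
Qed.

Lemma mvt0 (g dg : R -> R) (s : R) : 0 < s ->
  (forall x, 0 <= x <= s -> is_derive x 1 g (dg x)) ->
  exists2 c, 0 < c < s & g s - g 0 = dg c * s.
Proof.
move=> s0 hd.
have := @MVT R g dg 0 s s0.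
case.
- move=> x; rewrite in_itv /= => /andP [h1 h2]; apply: hd; rewrite !ltW //.
- apply: continuous_in_subspaceT => x; rewrite inE /= in_itv /= => hx.
  have := hd x hx => -[dx _].
  by apply: differentiable_continuous; apply/derivable1_diffP.
- by move=> c; rewrite in_itv /= subr0 => hc ->; exists c.
Qed.

Lemma ebasis_norm (a : 'I_N) : `|@ebasis R N a| <= 1.
Proof.
rewrite [leLHS]/Num.norm /= mx_normrE; apply: bigmax_le => // -[i j] _ /=.
by rewrite /ebasis mxE; case: (_ && _); rewrite ?normr1 ?normr0.
Qed.

Lemma aux1 (A B C D : R) : A - B - C + D = (A - B) - (C - D).
Proof. by ring. Qed.
Lemma aux2 (x s : R) : x * s * s = s * s * x.
Proof. by ring. Qed.
Lemma aux3 (x y z : R) : x - y = (x - z) - (y - z).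
Proof. by ring. Qed.

Variable f : 'rV[R]_N -> R.
Variable W : 'rV[R]_N.
Variable d : R.
Hypothesis d0 : 0 < d.
Hypothesis hU : forall y, `|y - W| < d -> thrice_diff_at f y.

Lemma pt_norm (a b : 'I_N) (x y : R) (c : R) : `|x| + `|y| < c ->
  `|(y *: @ebasis R N b + (x *: @ebasis R N a + W)) - W| < c.
Proof.
move=> h; rewrite addrA addrK; apply: le_lt_trans h.
apply: le_trans (ler_normD _ _) _; rewrite addrC; apply: lerD;
 rewrite normrZ; apply: ler_piMr => //; exact: ebasis_norm.
Qed.

Definition Dl (a b : 'I_N) (s : R) :=
  f (s *: @ebasis R N b + (s *: @ebasis R N a + W)) - f (s *: @ebasis R N a + W)
  - f (s *: @ebasis R N b + W) + f W.

Lemma Dl_sym a b s : Dl a b s = Dl b a s.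
Proof.
rewrite /Dl (addrCA (s *: @ebasis R N b)); congr (_ + _).
by rewrite addrAC.
Qed.

Lemma Dl_mvt (a b : 'I_N) (s : R) : 0 < s -> s + s < d ->
  exists x y, [/\ 0 < x < s, 0 < y < s &
   Dl a b s = s * s * pderiv b (pderiv a f) (y *: @ebasis R N b + (x *: @ebasis R N a + W))].
Proof.
move=> s0 ssd.
set ea := @ebasis R N a; set eb := @ebasis R N b.
have inU : forall x y, 0 <= x <= s -> 0 <= y <= s -> thrice_diff_at f (y *: eb + (x *: ea + W)).
  move=> x y /andP[x0 xs] /andP[y0 ys]; apply: hU; apply: pt_norm.
  by rewrite !ger0_norm //; apply: le_lt_trans ssd; apply: lerD.
have hs : 0 <= s <= s by rewrite (ltW s0) /=.
have h0 : (0:R) <= 0 <= s by rewrite (ltW s0) lexx.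
pose phi x := f (x *: ea + (s *: eb + W)) - f (x *: ea + W).
pose dphi x := pderiv a f (x *: ea + (s *: eb + W)) - pderiv a f (x *: ea + W).
have [xi /andP[xi0 xis] Exi] : exists2 c, 0 < c < s & phi s - phi 0 = dphi c * s.
  apply: mvt0; first exact: s0.
  move=> x hx.
  have [h1 _ _] := inU x s hx hs.
  have [h2 _ _] := inU x 0 hx h0.
  rewrite addrCA in h1; rewrite scale0r add0r in h2.
  have d1 := line_is_derive (diff_derivable (v:=ea) h1).
  have d2 := line_is_derive (diff_derivable (v:=ea) h2).
  have := is_deriveB d1 d2.
  have -> : phi = (fun x => f (x *: ea + (s *: eb + W))) - (fun x => f (x *: ea + W)) by apply/funext.
  by [].
pose psi y := pderiv a f (y *: eb + (xi *: ea + W)).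
pose dpsi y := pderiv b (pderiv a f) (y *: eb + (xi *: ea + W)).
have [eta /andP[eta0 etas] Eeta] : exists2 c, 0 < c < s & psi s - psi 0 = dpsi c * s.
  apply: mvt0; first exact: s0.
  move=> y hy.
  have hxi : 0 <= xi <= s by rewrite (ltW xi0) (ltW xis).
  have [_ h _] := inU xi y hxi hy.
  exact: (line_is_derive (diff_derivable (v:=eb) (h a))).
exists xi, eta; split; rewrite ?xi0 ?xis ?eta0 ?etas //.
have -> : Dl a b s = phi s - phi 0.
  by rewrite /phi /Dl !scale0r !add0r (addrCA (s *: ea)) aux1.
rewrite Exi; have -> : dphi xi = psi s - psi 0.
  by rewrite /dphi /psi scale0r add0r (addrCA (xi *: ea)).
by rewrite Eeta /dpsi aux2.
Qed.

Lemma hess_sym_ab (a b : 'I_N) :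
  pderiv a (pderiv b f) W = pderiv b (pderiv a f) W.
Proof.
set g1 := pderiv b (pderiv a f); set g2 := pderiv a (pderiv b f).
have [//|neq] := eqVneq (g2 W) (g1 W); exfalso.
have hW : thrice_diff_at f W by apply: hU; rewrite subrr normr0.
have [_ _ hW3] := hW.
have c1 : {for W, continuous g1} by apply: differentiable_continuous; exact: hW3.
have c2 : {for W, continuous g2} by apply: differentiable_continuous; exact: hW3.
set e := `|g1 W - g2 W| / 2.
have e0 : 0 < e by rewrite divr_gt0 // normr_gt0 subr_eq0 eq_sym.
have n1 : \forall t \near W, `|g1 W - g1 t| < e.
  by apply: (cvgr_dist_lt _ _ c1 _ e0).
have n2 : \forall t \near W, `|g2 W - g2 t| < e.
  by apply: (cvgr_dist_lt _ _ c2 _ e0).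
have [del del0 hdel] := (nbhs_ballP _ _).1 (filterI n1 n2).
set s := Num.min del d / 4.
have m0 : 0 < Num.min del d by rewrite lt_min del0 d0.
have s0 : 0 < s by rewrite divr_gt0.
have sm : s + s + s < Num.min del d by rewrite /s; lra.
have ssd : s + s < d.
  have : Num.min del d <= d by rewrite ge_min lexx orbT.
  by rewrite /s; lra.
have inB : forall x y, 0 < x < s -> 0 < y < s -> forall (a' b' : 'I_N),
    `|g1 W - g1 (y *: @ebasis R N b' + (x *: @ebasis R N a' + W))| < e /\ `|g2 W - g2 (y *: @ebasis R N b' + (x *: @ebasis R N a' + W))| < e.
  move=> x y /andP[x0 xs] /andP[y0 ys] a' b'.
  set P := y *: @ebasis R N b' + (x *: @ebasis R N a' + W).
  suff hb : ball W del P by exact: (hdel _ hb).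
  rewrite -ball_normE /ball_ /= distrC.
  have hxy : `|x| + `|y| < Num.min del d by rewrite !gtr0_norm //; lra.
  apply: (lt_le_trans (pt_norm a' b' hxy)).
  by rewrite ge_min lexx.
have [x1 [y1 [hx1 hy1 E1]]] := Dl_mvt a b s0 ssd.
have [x2 [y2 [hx2 hy2 E2]]] := Dl_mvt b a s0 ssd.
rewrite Dl_sym E2 in E1.
have ss0 : s * s != 0 by rewrite (gt_eqF (mulr_gt0 s0 s0)).
have E := mulfI ss0 E1.
have [_ B2] := inB _ _ hx2 hy2 b a.
have [B1 _] := inB _ _ hx1 hy1 a b.
rewrite -/g1 -/g2 in E.
have : `|g1 W - g2 W| < e + e.
  have -> : g1 W - g2 W = (g1 W - g1 (y1 *: @ebasis R N b + (x1 *: @ebasis R N a + W)))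
     - (g2 W - g2 (y2 *: @ebasis R N a + (x2 *: @ebasis R N b + W))).
    by rewrite E; exact: aux3.
  exact: (le_lt_trans (ler_normB _ _) (ltrD B1 B2)).
by rewrite /e -splitr ltxx.
Qed.

End Schwarz.

Section Main.
Variable R : realType.

Lemma r_facts (lam B eps : R) : 0 < eps -> 0 < B -> 0 < lam ->
  0 <= 9 * lam ^+ 2 - 25 * B * eps ->
  forall r, r = (3 * lam - Num.sqrt (9 * lam ^+ 2 - 25 * B * eps)) / (2 * B) ->
  [/\ 0 < r, B * r <= 3 / 2 * lam & B * r ^+ 2 - 3 * lam * r + 6 * eps = - eps / 4].
Proof.
move=> e0 B0 l0 D0 r0 ->.
set q := Num.sqrt _.
set r := (3 * lam - q) / (2 * B).
have q0 : 0 <= q by apply: sqrtr_ge0.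
have q2 : q ^+ 2 = 9 * lam ^+ 2 - 25 * B * eps by rewrite sqr_sqrtr.
have q3 : q < 3 * lam.
  rewrite -(@ltr_pXn2r _ 2) ?nnegrE //; last by rewrite mulr_ge0 // ltW.
  by rewrite q2; nra.
have rE : r * (2 * B) = 3 * lam - q by rewrite /r mulfVK // gt_eqF // mulr_gt0.
split.
- by rewrite /r divr_gt0 ?subr_gt0 // mulr_gt0.
- nra.
- have : 4 * B * (B * r ^+ 2 - 3 * lam * r + 6 * eps) = - B * eps.
    have -> : 4 * B * (B * r ^+ 2 - 3 * lam * r + 6 * eps) =
      (r * (2 * B)) ^+ 2 - 6 * lam * (r * (2 * B)) + 24 * B * eps by ring.
    rewrite rE; nra.
  move=> h; apply: (@mulfI _ (4 * B)); first by rewrite mulf_neq0 // gt_eqF.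
  by rewrite h; field.
Qed.

Lemma auxY (Y t : R) : t != 0 -> Y = (6 / t ^+ 3 * Y) * (t ^+ 3 / 6).
Proof. by move=> t0; field. Qed.

Lemma auxS (F r eps lam B : R) : F - r * eps + r ^+ 2 * lam / 2 - r ^+ 3 * B / 6 =
    F - r / 6 * (B * r ^+ 2 - 3 * lam * r + 6 * eps).
Proof. by field. Qed.

End Main.

Unset Implicit Arguments. Set Strict Implicit.

Theorem lemma2 (R : realType) (k n : nat) (v : 'I_k -> 'rV[R]_k)
  (W : 'rV[R]_(n * k)) (alpha eps B lam wmin wmax vmax : R) :
  (forall i j, dotv (v i) (v j) = (i == j)%:R) ->
  0 < alpha ->
  (exists U : set 'rV[R]_(n * k), open U /\
     [set y | enorm (y - W) <= alpha] `<=` U /\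
     forall y, U y -> thrice_diff_at (Floss v) y) ->
  0 < eps -> 0 < B ->
  enorm (gradient (Floss v) W) <= eps ->
  (forall (t : R) (u : 'rV[R]_(n * k)), 0 < t <= alpha -> enorm u = 1 ->
     `|remainder (Floss v) W u t| <= B) ->
  min_eigenvalue (hessian (Floss v) W) lam ->
  0 < lam ->
  0 <= 9 * lam ^+ 2 - 25 * B * eps ->
  (forall i, wmin <= enorm (wblock W i)) -> (exists i, enorm (wblock W i) = wmin) ->
  (forall i, enorm (wblock W i) <= wmax) -> (exists i, enorm (wblock W i) = wmax) ->
  (forall i, enorm (v i) <= vmax) -> (exists i, enorm (v i) = vmax) ->
  let r := (3 * lam - Num.sqrt (9 * lam ^+ 2 - 25 * B * eps)) / (2 * B) in
  r < alpha ->
  r < wmin ->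
  Floss v W > r ^+ 2 * (2^-1
       + (n * (n - 1))%:R * ((wmax + r) / (2 * pi * (wmin - r)) + 2^-1)
       + (n * k)%:R * vmax / (2 * pi * (wmin - r))) + r * eps ->
  exists wstar : 'rV[R]_(n * k),
    enorm (wstar - W) <= r /\
    (exists delta : R, 0 < delta /\
       forall w' : 'rV[R]_(n * k), enorm (w' - wstar) < delta ->
         Floss v wstar <= Floss v w') /\
    0 < Floss v wstar.

Proof.
move=> vorth alpha0 [U [Uo [Uball Udiff]]] eps0 B0 gradb remb mineig lam0 D0
  wminle [i0 wmin_eq] wmaxle [i1 wmax_eq] vmaxle [j1 vmax_eq] r ralpha rwmin Fbig.
have hr : r = (3 * lam - Num.sqrt (9 * lam ^+ 2 - 25 * B * eps)) / (2 * B) by [].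
have [r0 rB rq] := r_facts eps0 B0 lam0 D0 hr.
have UW : U W by apply: Uball; rewrite /= subrr enorm0 ltW.
have nW : nbhs W U by apply: open_nbhs_nbhs; split.
have [d d0 hd] := (nbhs_ballP _ _).1 nW.
have hU : forall y, `|y - W| < d -> thrice_diff_at (Floss v) y.
  move=> y hy; apply: Udiff; apply: hd; rewrite -ball_normE /ball_ /= distrC; exact: hy.
have Hsym : (hessian (Floss v) W)^T = hessian (Floss v) W.
  apply/matrixP => a b; rewrite !mxE; exact: (hess_sym_ab d0 hU b a).
have ray := rayleigh Hsym mineig.
have key : forall t u, 0 < t <= alpha -> enorm u = 1 ->
   Floss v W - t * eps + t ^+ 2 * lam / 2 - t ^+ 3 * B / 6 <= Floss v (W + t *: u).
  move=> t u ht hu.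
  have hrem := remb t u ht hu.
  have hQ := ray u hu.
  have t0 : 0 < t by case/andP: ht.
  have hg : - eps <= dotv (gradient (Floss v) W) u.
    have := CS (gradient (Floss v) W) u; rewrite hu mulr1 => h.
    have := le_trans h gradb; rewrite ler_norml => /andP[h1 _]; exact: h1.
  move: hrem; rewrite /remainder.
  set FW := Floss v W; set Ft := Floss v (W + t *: u).
  set G := dotv _ u; set Q := (u *m _ *m u^T) 0 0.
  have QE : Q = Bf (hessian (Floss v) W) u u by [].
  rewrite -QE in hQ.
  set Y := Ft - FW - t * G - 2^-1 * t ^+ 2 * Q.
  rewrite ler_norml => /andP[hY _].
  have t3 : 0 < t ^+ 3 / 6 by rewrite divr_gt0 // exprn_gt0.
  have hY2 : - B * (t ^+ 3 / 6) <= Y.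
    have tn0 : t != 0 by rewrite gt_eqF.
    rewrite [X in _ <= X](auxY Y tn0).
    by rewrite ler_pM2r.
  have hG : - eps * t <= G * t by rewrite ler_pM2r.
  have hQ2 : lam * t ^+ 2 <= Q * t ^+ 2 by rewrite ler_pM2r // exprn_gt0.
  rewrite /Y in hY2.
  have e1 : t ^+ 3 = t * t ^+ 2 by rewrite exprS.
  nra.
have lowr : forall t u, 0 < t <= r -> enorm u = 1 -> Floss v W - t * eps <= Floss v (W + t *: u).
  move=> t u /andP[t0 tr] hu.
  have := key t u _ hu; rewrite t0 (le_trans tr (ltW ralpha)) => /(_ erefl) h.
  apply: le_trans h; rewrite -subr_ge0.
  have -> : Floss v W - t * eps + t ^+ 2 * lam / 2 - t ^+ 3 * B / 6 - (Floss v W - t * eps)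
     = t ^+ 2 * (lam / 2 - t * B / 6) by ring.
  apply: mulr_ge0; first by rewrite sqr_ge0.
  have : t * B <= r * B by rewrite ler_pM2r.
  nra.
have sphere : forall u, enorm u = 1 -> Floss v W < Floss v (W + r *: u).
  move=> u hu.
  have := key r u _ hu; rewrite r0 (ltW ralpha) => /(_ erefl) h.
  apply: lt_le_trans h.
  have -> : Floss v W - r * eps + r ^+ 2 * lam / 2 - r ^+ 3 * B / 6 =
    Floss v W - r / 6 * (B * r ^+ 2 - 3 * lam * r + 6 * eps) by apply: auxS.
  rewrite rq; have : 0 < r * eps by rewrite mulr_gt0.
  lra.
set K := [set y : 'rV[R]_(n * k) | enorm (y - W) <= r].
have cK : compact K.
  apply: (@enorm_ball_compact _ _ W r (fun x => x <= r)) => [x //|].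
  have fc : continuous (fun y : 'rV[R]_(n * k) => enorm (y - W)).
    move=> y; apply: continuous_comp; last exact: enorm_continuous.
    by apply: continuousB; [exact: cvg_id | exact: cst_continuous].
  exact: (proj1 (continuous_closedP _) fc [set x | x <= r] (@closed_le R r)).
have K0 : K !=set0 by exists W; rewrite /K /= subrr enorm0 ltW.
have cF : {within K, continuous (Floss v)}.
  apply: continuous_in_subspaceT => y; rewrite inE /K /= => Ky.
  have [hdf _ _] := Udiff y (Uball y (le_trans Ky (ltW ralpha))).
  exact: differentiable_continuous hdf.
have [ws wsK wsmin] := EVT_min_rV K0 cK cF.
move: wsK; rewrite inE /K /= => wsK.
have WK : W \in K by rewrite inE /K /= subrr enorm0 ltW.
have FwsW := wsmin W WK.
have wslt : enorm (ws - W) < r.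
  rewrite lt_neqAle wsK andbT; apply/eqP => he.
  set u := r^-1 *: (ws - W).
  have hu : enorm u = 1 by rewrite /u enormZ he ger0_norm ?invr_ge0 ?ltW // mulVf // gt_eqF.
  have wsE : W + r *: u = ws by rewrite /u scalerA mulfV ?gt_eqF // scale1r addrC subrK.
  have := sphere u hu; rewrite wsE => h.
  have := lt_le_trans h FwsW; rewrite ltxx; exact: notF.
exists ws; split; first exact: wsK.
split.
  exists (r - enorm (ws - W)); split; first by rewrite subr_gt0.
  move=> w' hw'; apply: wsmin; rewrite inE /K /=.
  have := enormD (w' - ws) (ws - W).
  have -> : w' - ws + (ws - W) = w' - W by rewrite addrA subrK.
  lra.
have X0 : 0 <= 2^-1
       + (n * (n - 1))%:R * ((wmax + r) / (2 * pi * (wmin - r)) + 2^-1)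
       + (n * k)%:R * vmax / (2 * pi * (wmin - r)).
  have c0 : 0 < 2 * pi * (wmin - r) by rewrite !mulr_gt0 ?pi_gt0 ?subr_gt0.
  have wm0 : 0 <= wmax by rewrite -wmax_eq enorm_ge0.
  have vm0 : 0 <= vmax by rewrite -vmax_eq enorm_ge0.
  apply: addr_ge0; first apply: addr_ge0.
  - by rewrite invr_ge0.
  - apply: mulr_ge0; first exact: ler0n.
    apply: addr_ge0; last by rewrite invr_ge0.
    by apply: divr_ge0; [apply: addr_ge0; [exact: wm0 | exact: ltW] | exact: ltW].
  - apply: divr_ge0; last exact: ltW.
    by apply: mulr_ge0; [exact: ler0n | exact: vm0].
have lowws : Floss v W - r * eps <= Floss v ws.
  have re0 : 0 <= r * eps by rewrite mulr_ge0 // ltW.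
  have [t0|tpos] := eqVneq (enorm (ws - W)) 0.
    have : ws = W by apply/eqP; rewrite -subr_eq0; apply/eqP; exact: enorm_eq0.
    move=> ->; lra.
  set t := enorm (ws - W) in tpos.
  have t0' : 0 < t by rewrite lt0r tpos enorm_ge0.
  set u := t^-1 *: (ws - W).
  have hu : enorm u = 1 by rewrite /u enormZ ger0_norm ?invr_ge0 ?ltW // mulVf.
  have wsE : W + t *: u = ws by rewrite /u scalerA mulfV // scale1r addrC subrK.
  have := lowr t u _ hu; rewrite t0' wsK wsE => /(_ erefl) h.
  apply: le_trans h; rewrite lerD2l lerN2 ler_pM2r //.
set X := (X in r ^+ 2 * X) in Fbig.
have : 0 <= r ^+ 2 * X by rewrite mulr_ge0 // sqr_ge0.
lra.
Qed.
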